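(* Let $\alpha>0$ be irrational and $A=\begin{bmatrix} m_1&n_1\\ m_2&n_2\end{bmatrix}\in GL(2,\mathbb Z)$. Then $\pi(A)$ restricts to an isometric automorphism of $\mathcal A_\alpha$ if and only if $m_1+\alpha n_1>0$ and $n_1\alpha^2+(m_1-n_2)\alpha-m_2=0$.
   Context: For $f\in C(\mathbb T^2)$ (with $\mathbb T$ the unit circle), the Fourier transform is $\hat f(m,n)=\int_{\mathbb T^2} f(e^{is},e^{it})e^{-i(ms+nt)}\,d\mu$, $\mu$ normalized Lebesgue measure. For a positive irrational $\alpha$, $\mathcal A_\alpha=\{f\in C(\mathbb T^2): \hat f(m,n)=0 \text{ whenever } m+\alpha n<0\}$, a uniform algebra with the sup norm on $\mathbb T^2$. For $A=\begin{bmatrix} a&b\\ c&d\end{bmatrix}\in GL(2,\mathbb Z)$, $\pi(A):C(\mathbb T^2)\to C(\mathbb T^2)$ is $\pi(A)(f)=f\circ\varphi$ with $\varphi(z,w)=(z^aw^b,z^cw^d)$. *)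

(* Defs.v *)
From Stdlib Require Import Reals ZArith ClassicalEpsilon.
Open Scope R_scope.

Definition C : Type := (R * R)%type.
Definition C0 : C := (0, 0).
Definition Cadd (z w : C) : C := (fst z + fst w, snd z + snd w).
Definition Cmul (z w : C) : C :=
  (fst z * fst w - snd z * snd w, fst z * snd w + snd z * fst w).
Definition Cmod (z : C) : R := sqrt (fst z ^ 2 + snd z ^ 2).

(* A function on T^2 is represented in angle coordinates:
   F s t = f(e^{is}, e^{it}). *)
Definition fun_T2 : Type := R -> R -> C.

Definition cont_T2 (F : fun_T2) : Prop :=
  (forall s t, F (s + 2 * PI) t = F s t /\ F s (t + 2 * PI) = F s t) /\
  (forall s t eps, eps > 0 -> exists delta, delta > 0 /\
     forall s' t', Rabs (s' - s) < delta -> Rabs (t' - t) < delta ->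
       Cmod (Cadd (F s' t') (- fst (F s t), - snd (F s t))) < eps).

(* Value of the Riemann integral of g over [a,b] (when it exists; it does
   for all integrands used below, which are continuous). *)
Definition RInt (g : R -> R) (a b : R) : R :=
  epsilon (inhabits 0)
    (fun v => exists pr : Riemann_integrable g a b, RiemannInt pr = v).

(* Iterated integral over [0,2PI]^2 (equals the double integral for
   continuous integrands, by Fubini). *)
Definition Int2 (g : R -> R -> R) : R :=
  RInt (fun t => RInt (fun s => g s t) 0 (2 * PI)) 0 (2 * PI).

(* Fourier transform w.r.t. normalized Lebesgue measure on T^2:
   hat f(m,n) = (1/(4 PI^2)) * int int F(s,t) e^{-i(ms+nt)} ds dt. *)
Definition fourier (F : fun_T2) (m n : Z) : C :=
  let th s t := IZR m * s + IZR n * t in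
  ( / (4 * PI ^ 2) *
      Int2 (fun s t => fst (F s t) * cos (th s t) + snd (F s t) * sin (th s t)),
    / (4 * PI ^ 2) *
      Int2 (fun s t => snd (F s t) * cos (th s t) - fst (F s t) * sin (th s t))).

Definition in_Aalpha (alpha : R) (F : fun_T2) : Prop :=
  cont_T2 F /\
  forall m n : Z, IZR m + alpha * IZR n < 0 -> fourier F m n = C0.

Definition irrational (x : R) : Prop :=
  ~ exists p q : Z, q <> 0%Z /\ x = IZR p / IZR q.

Definition in_GL2Z (a b c d : Z) : Prop :=
  (a * d - b * c = 1)%Z \/ (a * d - b * c = -1)%Z.

(* pi(A) f = f o phi, phi(z,w) = (z^a w^b, z^c w^d); in angle coordinates
   (s,t) |-> (a s + b t, c s + d t). *)
Definition piA (a b c d : Z) (F : fun_T2) : fun_T2 :=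
  fun s t => F (IZR a * s + IZR b * t) (IZR c * s + IZR d * t).

Definition is_supnorm (F : fun_T2) (M : R) : Prop :=
  is_lub (fun x => exists s t, x = Cmod (F s t)) M.

Definition feq (F G : fun_T2) : Prop := forall s t, F s t = G s t.

Definition restricts_to_isometric_automorphism (alpha : R) (a b c d : Z) : Prop :=
  (forall F, in_Aalpha alpha F -> in_Aalpha alpha (piA a b c d F)) /\
  (forall G, in_Aalpha alpha G ->
     exists F, in_Aalpha alpha F /\ feq (piA a b c d F) G) /\
  (forall F1 F2, in_Aalpha alpha F1 -> in_Aalpha alpha F2 ->
     feq (piA a b c d F1) (piA a b c d F2) -> feq F1 F2) /\
  (forall F1 F2, in_Aalpha alpha F1 -> in_Aalpha alpha F2 ->
     feq (piA a b c d (fun s t => Cadd (F1 s t) (F2 s t)))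
         (fun s t => Cadd (piA a b c d F1 s t) (piA a b c d F2 s t)) /\
     feq (piA a b c d (fun s t => Cmul (F1 s t) (F2 s t)))
         (fun s t => Cmul (piA a b c d F1 s t) (piA a b c d F2 s t))) /\
  (forall (k : C) F, in_Aalpha alpha F ->
     feq (piA a b c d (fun s t => Cmul k (F s t)))
         (fun s t => Cmul k (piA a b c d F s t))) /\
  (forall F M, in_Aalpha alpha F ->
     (is_supnorm F M <-> is_supnorm (piA a b c d F) M)).

(* Main.v *)
Require Import Defs.
From Stdlib Require Import Reals ZArith.
From Stdlib Require Import Lra Lia FunctionalExtensionality ClassicalEpsilon.
From Coquelicot Require Import Coquelicot.
Open Scope R_scope.

Definition C2 (h : R -> R -> R) : Prop :=
  forall s t eps, eps > 0 -> exists delta, delta > 0 /\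
    forall s' t', Rabs (s' - s) < delta -> Rabs (t' - t) < delta ->
      Rabs (h s' t' - h s t) < eps.

Lemma C2_2d h : C2 h -> forall s t, continuity_2d_pt h s t.
Proof.
  intros H s t eps. destruct (H s t eps (cond_pos eps)) as [d [dp Hd]].
  exists (mkposreal d dp). intros u v Hu Hv. apply Hd; assumption.
Qed.

Lemma C2_cont1 h t : C2 h -> forall s, continuity_pt (fun s => h s t) s.
Proof.
  intros H s. unfold continuity_pt, continue_in, limit1_in, limit_in. simpl.
  unfold R_dist. intros eps Heps. destruct (H s t eps Heps) as [d [dp Hd]].
  exists d. split; [lra|]. intros x [_ Hx]. apply Hd; auto.
  rewrite Rminus_diag, Rabs_R0; lra.
Qed.

Lemma C2_cont2 h s : C2 h -> forall t, continuity_pt (fun t => h s t) t.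
Proof.
  intros H t. unfold continuity_pt, continue_in, limit1_in, limit_in. simpl.
  unfold R_dist. intros eps Heps. destruct (H s t eps Heps) as [d [dp Hd]].
  exists d. split; [lra|]. intros x [_ Hx]. apply Hd; auto.
  rewrite Rminus_diag, Rabs_R0; lra.
Qed.

Lemma cpt_cont f x : continuity_pt f x -> continuous f x.
Proof. intro H. apply continuity_pt_filterlim. exact H. Qed.

Lemma cont_exRInt f a b : (forall x, continuity_pt f x) -> ex_RInt f a b.
Proof. intro H. apply (ex_RInt_continuous (V:=R_CompleteNormedModule)). intros. apply cpt_cont, H. Qed.

Lemma DefsRInt_eq f a b : ex_RInt f a b -> Defs.RInt f a b = RInt f a b.
Proof.
  intro H. unfold Defs.RInt.
  destruct (epsilon_spec (inhabits 0)
    (fun v => exists pr : Riemann_integrable f a b, RiemannInt pr = v)) as [pr Hpr].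
  - exists (RInt f a b). exists (ex_RInt_Reals_0 _ _ _ H). symmetry. apply RInt_Reals.
  - rewrite <- Hpr. symmetry. apply RInt_Reals.
Qed.

Lemma param_cont_le h a b : C2 h -> a <= b -> forall t0,
  continuity_pt (fun t => RInt (fun s => h s t) a b) t0.
Proof.
  intros H Hab t0. unfold continuity_pt, continue_in, limit1_in, limit_in. simpl.
  unfold R_dist. intros eps Heps.
  assert (He' : 0 < eps / (b - a + 1)) by (apply Rdiv_lt_0_compat; lra).
  destruct (uniform_continuity_2d h a b (t0 - 1) (t0 + 1)
     (fun x y _ _ => C2_2d h H x y) (mkposreal _ He')) as [d Hd].
  exists (Rmin d 1). split. { apply Rmin_pos; [apply cond_pos| lra]. }
  intros t [_ Ht].
  assert (Ht1 : Rabs (t - t0) < d) by (eapply Rlt_le_trans; [exact Ht| apply Rmin_l]).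
  assert (Ht2 : Rabs (t - t0) < 1) by (eapply Rlt_le_trans; [exact Ht| apply Rmin_r]).
  assert (Ex : forall t, ex_RInt (fun s => h s t) a b)
    by (intro; apply cont_exRInt; apply C2_cont1; exact H).
  assert (E : RInt (fun s => h s t) a b - RInt (fun s => h s t0) a b
             = RInt (fun s => h s t - h s t0) a b).
  { rewrite (RInt_minus (V:=R_CompleteNormedModule) (fun s => h s t) (fun s => h s t0)); auto. }
  rewrite E.
  eapply Rle_lt_trans. apply abs_RInt_le_const with (M := eps / (b - a + 1)); auto.
  - apply (ex_RInt_minus (V:=R_NormedModule)); auto.
  - intros s Hs. left. apply (Hd s t0 s t); try lra.
    + split; apply Rabs_lt_between' in Ht2; lra.
    + rewrite Rminus_diag, Rabs_R0. apply cond_pos.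
  - assert (Hp : (b - a) * (eps / (b - a + 1)) = eps * ((b - a) / (b - a + 1))) by (field; lra).
    rewrite Hp. assert (Hq : (b - a) / (b - a + 1) < 1).
    { apply Rmult_lt_reg_r with (b - a + 1). lra. unfold Rdiv.
      rewrite Rmult_assoc, Rinv_l by lra. lra. }
    nra.
Qed.

Lemma C2_swap h : C2 h -> C2 (fun t s => h s t).
Proof.
  intros H t s eps He. destruct (H s t eps He) as [d [dp Hd]].
  exists d. split; auto.
Qed.

Lemma param_cont h a b : C2 h -> forall t0,
  continuity_pt (fun t => RInt (fun s => h s t) a b) t0.
Proof.
  intros H t0. destruct (Rle_dec a b) as [Hab|Hab].
  - apply param_cont_le; auto.
  - assert (E : (fun t => RInt (fun s => h s t) a b) = (fun t => - RInt (fun s => h s t) b a)).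
    { apply functional_extensionality. intro t.
      rewrite <- (opp_RInt_swap (V:=R_CompleteNormedModule)). reflexivity.
      apply ex_RInt_swap. apply cont_exRInt. apply C2_cont1. auto. }
    rewrite E. apply continuity_pt_opp. apply param_cont_le; auto. lra.
Qed.

Lemma ftc g x : (forall y, continuity_pt g y) -> forall a,
  is_derive (fun x => RInt g a x) x (g x).
Proof.
  intros H a. apply (is_derive_RInt (V:=R_CompleteNormedModule)) with (a := a).
  - exists (mkposreal 1 Rlt_0_1). intros y _. apply (RInt_correct (V:=R_CompleteNormedModule)).
    apply cont_exRInt; auto.
  - apply cpt_cont; auto.
Qed.

Lemma deriv0_const f a b : (forall x, is_derive f x 0) -> f a = f b.
Proof.
  intro H. destruct (MVT_cor4 f (fun _ => 0) a (Rabs (b - a))) with (b := b) as [c [Hc _]].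
  - intros; apply H.
  - lra.
  - lra.
Qed.

Lemma fubini h L : C2 h ->
  RInt (fun t => RInt (fun s => h s t) 0 L) 0 L =
  RInt (fun s => RInt (fun t => h s t) 0 L) 0 L.
Proof.
  intro H.
  set (f := fun x t => RInt (fun s => h s t) 0 x).
  assert (Df : forall x t, is_derive (fun u => f u t) x (h x t)).
  { intros x t. unfold f. apply (ftc (fun s => h s t)). apply C2_cont1; auto. }
  assert (DPhi : forall x, is_derive (fun x => RInt (fun t => f x t) 0 L) x
                            (RInt (fun t => h x t) 0 L)).
  { intro x.
    assert (E : RInt (fun t => h x t) 0 L = RInt (fun t => Derive (fun u => f u t) x) 0 L).
    { apply RInt_ext. intros t _. symmetry. apply is_derive_unique. apply Df. }
    rewrite E. apply is_derive_RInt_param.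
    - exists (mkposreal 1 Rlt_0_1). intros y _ t _. eexists. apply Df.
    - intros t _. apply continuity_2d_pt_ext with (f := h).
      + intros u v. symmetry. apply is_derive_unique. apply Df.
      + apply C2_2d; auto.
    - exists (mkposreal 1 Rlt_0_1). intros y _. apply cont_exRInt.
      intro t. unfold f. apply param_cont. auto. }
  assert (DPsi : forall x, is_derive (fun x => RInt (fun s => RInt (fun t => h s t) 0 L) 0 x) x
                            (RInt (fun t => h x t) 0 L)).
  { intro x. apply (ftc (fun s => RInt (fun t => h s t) 0 L)).
    intro y. apply (param_cont (fun t s => h s t)). apply C2_swap; auto. }
  assert (Z : forall x, is_derive (fun x => RInt (fun t => f x t) 0 L -
                 RInt (fun s => RInt (fun t => h s t) 0 L) 0 x) x 0).
  { intro x. pose proof (is_derive_minus _ _ x _ _ (DPhi x) (DPsi x)) as K.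
    rewrite minus_eq_zero in K. exact K. }
  pose proof (deriv0_const _ 0 L Z) as E. simpl in E.
  unfold f in E.
  rewrite (RInt_point 0 (fun s => RInt (fun t => h s t) 0 L)) in E.
  assert (E0 : RInt (fun t => RInt (fun s => h s t) 0 0) 0 L = 0).
  { rewrite (RInt_ext _ (fun _ => 0)). rewrite RInt_const. apply Rmult_0_r.
    intros. exact (RInt_point (V:=R_CompleteNormedModule) 0 _). }
  rewrite E0 in E. unfold zero in E. simpl in E. lra.
Qed.

Definition cont1 (g : R -> R) := forall x, continuity_pt g x.

Lemma RInt_shift g a b c : cont1 g ->
  RInt (fun y => g (y + c)) a b = RInt g (a + c) (b + c).
Proof.
  intro H. pose proof (RInt_comp_lin (V:=R_CompleteNormedModule) g 1 c a b) as K.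
  rewrite !Rmult_1_l in K. rewrite <- K by (apply cont_exRInt; auto).
  apply RInt_ext. intros. unfold scal; simpl; unfold mult; simpl. rewrite !Rmult_1_l. reflexivity.
Qed.

Lemma RInt_refl g a b : cont1 g ->
  RInt (fun y => g (- y)) a b = - RInt g (- a) (- b).
Proof.
  intro H. pose proof (RInt_comp_lin (V:=R_CompleteNormedModule) g (-1) 0 a b) as K.
  rewrite (RInt_scal (V:=R_CompleteNormedModule)) in K.
  2:{ apply cont_exRInt. intro x. apply continuity_pt_comp with (f1 := fun y => -1 * y + 0).
      - reg. - apply H. }
  replace (-1 * a + 0) with (-a) in K by ring. replace (-1 * b + 0) with (-b) in K by ring.
  assert (E: RInt (fun y => g (-1*y+0)) a b = RInt (fun y => g(-y)) a b)
    by (apply RInt_ext; intros; f_equal; ring).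
  rewrite E in K. rewrite <- K. unfold scal; simpl; unfold mult; simpl.
  set (X := RInt (fun y => g (-y)) a b). clearbody X. simpl in X. lra.
  apply cont_exRInt; auto.
Qed.

Definition per (g : R -> R) := forall x, g (x + 2 * PI) = g x.

Lemma Chasles g a b c : cont1 g -> RInt g a b + RInt g b c = RInt g a c.
Proof.
  intro H. apply (RInt_Chasles (V:=R_CompleteNormedModule)); apply cont_exRInt; auto.
Qed.

Lemma swapR g a b : cont1 g -> RInt g b a = - RInt g a b.
Proof.
  intro H. rewrite <- (opp_RInt_swap (V:=R_CompleteNormedModule)). reflexivity.
  apply cont_exRInt; auto.
Qed.

Lemma per_shift g c : cont1 g -> per g ->
  RInt (fun s => g (s + c)) 0 (2 * PI) = RInt g 0 (2 * PI).
Proof.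
  intros H P. rewrite RInt_shift by auto. rewrite Rplus_0_l.
  assert (E : RInt g (2 * PI) (2 * PI + c) = RInt g 0 c).
  { replace (2 * PI + c) with (c + 2 * PI) by ring.
    rewrite <- (Rplus_0_l (2 * PI)) at 1. rewrite <- RInt_shift by auto.
    apply RInt_ext. intros. apply P. }
  rewrite <- (Chasles g c (2 * PI) (2 * PI + c)) by auto.
  rewrite <- (Chasles g c 0 (2 * PI)) by auto.
  rewrite E, (swapR g 0 c) by auto. lra.
Qed.

Lemma per_refl g : cont1 g -> per g ->
  RInt (fun s => g (- s)) 0 (2 * PI) = RInt g 0 (2 * PI).
Proof.
  intros H P. rewrite RInt_refl by auto. rewrite Ropp_0.
  rewrite (swapR g (-(2*PI)) 0) by auto.
  assert (E1: RInt g (-(2*PI)) 0 = RInt (fun y => g (y + -(2*PI))) 0 (2*PI))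
    by (rewrite RInt_shift by auto; f_equal; ring).
  rewrite E1. rewrite Ropp_involutive.
  apply RInt_ext. intros. replace (x + - (2 * PI)) with ((x - 2 * PI)) by ring.
  rewrite <- (P (x - 2 * PI)). f_equal. ring.
Qed.

Lemma per_int (g : R -> R) : (forall x, g (x + 2 * PI) = g x) ->
  forall k x, g (x + 2 * PI * IZR k) = g x.
Proof.
  intros P.
  assert (N : forall n x, g (x + 2 * PI * INR n) = g x).
  { induction n; intro x. simpl. f_equal. ring.
    rewrite S_INR. replace (x + 2 * PI * (INR n + 1)) with ((x + 2 * PI * INR n) + 2 * PI) by ring.
    rewrite P. apply IHn. }
  intros k x. destruct (Z_le_gt_dec 0 k) as [Hk|Hk].
  - replace k with (Z.of_nat (Z.to_nat k)) by lia. rewrite <- INR_IZR_INZ. apply N.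
  - replace k with (- Z.of_nat (Z.to_nat (- k)))%Z by lia.
    rewrite opp_IZR, <- INR_IZR_INZ.
    rewrite <- (N (Z.to_nat (-k)) (x + 2 * PI * - INR (Z.to_nat (- k)))). f_equal. ring.
Qed.

Definition P2 (h : R -> R -> R) : Prop :=
  C2 h /\ (forall s t, h (s + 2 * PI) t = h s t) /\ (forall s t, h s (t + 2 * PI) = h s t).

Lemma lin_bound (a b u v d : R) : Rabs u < d -> Rabs v < d ->
  Rabs (a * u + b * v) <= (Rabs a + Rabs b) * d.
Proof.
  intros Hu Hv. eapply Rle_trans. apply Rabs_triang. rewrite !Rabs_mult.
  pose proof (Rabs_pos a). pose proof (Rabs_pos b). nra.
Qed.

Lemma P2_lin h (a b c d : Z) : P2 h ->
  P2 (fun s t => h (IZR a * s + IZR b * t) (IZR c * s + IZR d * t)).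
Proof.
  intros [HC [P1 P2']]. split; [|split].
  - intros s t eps He. destruct (HC (IZR a * s + IZR b * t) (IZR c * s + IZR d * t) eps He)
      as [del [Hdel Hd]].
    set (K := Rabs (IZR a) + Rabs (IZR b) + Rabs (IZR c) + Rabs (IZR d) + 1).
    assert (HK : 0 < K) by (unfold K; pose proof (Rabs_pos (IZR a)); pose proof (Rabs_pos (IZR b));
      pose proof (Rabs_pos (IZR c)); pose proof (Rabs_pos (IZR d)); lra).
    exists (del / K). split. apply Rdiv_lt_0_compat; lra.
    intros s' t' Hs Ht. apply Hd.
    + replace (IZR a * s' + IZR b * t' - (IZR a * s + IZR b * t)) with
        (IZR a * (s' - s) + IZR b * (t' - t)) by ring.
      eapply Rle_lt_trans. apply lin_bound; eauto.
      apply Rlt_le_trans with (K * (del / K)).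
      * apply Rmult_lt_compat_r. apply Rdiv_lt_0_compat; lra.
        unfold K. pose proof (Rabs_pos (IZR c)); pose proof (Rabs_pos (IZR d)); lra.
      * right. field. lra.
    + replace (IZR c * s' + IZR d * t' - (IZR c * s + IZR d * t)) with
        (IZR c * (s' - s) + IZR d * (t' - t)) by ring.
      eapply Rle_lt_trans. apply lin_bound; eauto.
      apply Rlt_le_trans with (K * (del / K)).
      * apply Rmult_lt_compat_r. apply Rdiv_lt_0_compat; lra.
        unfold K. pose proof (Rabs_pos (IZR a)); pose proof (Rabs_pos (IZR b)); lra.
      * right. field. lra.
  - intros s t.
    replace (IZR a * (s + 2 * PI) + IZR b * t) with ((IZR a * s + IZR b * t) + 2 * PI * IZR a) by ring.
    replace (IZR c * (s + 2 * PI) + IZR d * t) with ((IZR c * s + IZR d * t) + 2 * PI * IZR c) by ring.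
    rewrite (per_int (fun x => h x _)) by (intro; apply P1).
    apply (per_int (fun y => h _ y)). intro; apply P2'.
  - intros s t.
    replace (IZR a * s + IZR b * (t + 2 * PI)) with ((IZR a * s + IZR b * t) + 2 * PI * IZR b) by ring.
    replace (IZR c * s + IZR d * (t + 2 * PI)) with ((IZR c * s + IZR d * t) + 2 * PI * IZR d) by ring.
    rewrite (per_int (fun x => h x _)) by (intro; apply P1).
    apply (per_int (fun y => h _ y)). intro; apply P2'.
Qed.

Definition I2 (h : R -> R -> R) : R :=
  RInt (fun t => RInt (fun s => h s t) 0 (2 * PI)) 0 (2 * PI).

Lemma I2_shear h k : P2 h -> I2 (fun s t => h (s + k * t) t) = I2 h.
Proof.
  intros [HC [P1 _]]. unfold I2. apply RInt_ext. intros t _.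
  apply (per_shift (fun s => h s t)). intro; apply C2_cont1; auto. intro; apply P1.
Qed.

Lemma I2_neg1 h : P2 h -> I2 (fun s t => h (- s) t) = I2 h.
Proof.
  intros [HC [P1 _]]. unfold I2. apply RInt_ext. intros t _.
  apply (per_refl (fun s => h s t)). intro; apply C2_cont1; auto. intro; apply P1.
Qed.

Lemma I2_neg2 h : P2 h -> I2 (fun s t => h s (- t)) = I2 h.
Proof.
  intros [HC [_ P2']]. unfold I2.
  apply (per_refl (fun t => RInt (fun s => h s t) 0 (2 * PI))).
  - intro; apply param_cont; auto.
  - intro t. apply RInt_ext. intros; apply P2'.
Qed.

Lemma I2_swap h : P2 h -> I2 (fun s t => h t s) = I2 h.
Proof.
  intros [HC _]. unfold I2. rewrite (fubini (fun s t => h t s)). reflexivity.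
  apply C2_swap; auto.
Qed.

Definition good (a b c d : Z) : Prop :=
  forall h, P2 h -> I2 (fun s t => h (IZR a * s + IZR b * t) (IZR c * s + IZR d * t)) = I2 h.

Lemma good_id : good 1 0 0 1.
Proof.
  intros h _. f_equal. apply functional_extensionality; intro s.
  apply functional_extensionality; intro t. f_equal; ring.
Qed.

Lemma good_R1 k a' b' c' d' a b c d : good a' b' c' d' ->
  a = (a' + k * c')%Z -> b = (b' + k * d')%Z -> c = c' -> d = d' -> good a b c d.
Proof.
  intros G Ha Hb Hc Hd h Ph. subst.
  set (h' := fun x y => h (x + IZR k * y) y).
  assert (Ph' : P2 h').
  { unfold h'. pose proof (P2_lin h 1 k 0 1 Ph) as Q.
    replace (fun x y => h (x + IZR k * y) y) with
      (fun s t => h (IZR 1 * s + IZR k * t) (IZR 0 * s + IZR 1 * t)). exact Q.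
    apply functional_extensionality; intro s; apply functional_extensionality; intro t.
    f_equal; simpl; ring. }
  rewrite <- (I2_shear h (IZR k) Ph). transitivity (I2 (fun s t => h' (IZR a' * s + IZR b' * t) (IZR c' * s + IZR d' * t))); [| exact (G h' Ph')]. unfold h'. f_equal.
  apply functional_extensionality; intro s; apply functional_extensionality; intro t.
  rewrite !plus_IZR, !mult_IZR. f_equal; ring.
Qed.

Lemma good_N1 a' b' c' d' a b c d : good a' b' c' d' ->
  a = (- a')%Z -> b = (- b')%Z -> c = c' -> d = d' -> good a b c d.
Proof.
  intros G Ha Hb Hc Hd h Ph. subst.
  set (h' := fun x y => h (- x) y).
  assert (Ph' : P2 h').
  { pose proof (P2_lin h (-1) 0 0 1 Ph) as Q.
    replace h' with (fun s t => h (IZR (-1) * s + IZR 0 * t) (IZR 0 * s + IZR 1 * t)). exact Q.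
    apply functional_extensionality; intro s; apply functional_extensionality; intro t.
    unfold h'. f_equal; simpl; ring. }
  rewrite <- (I2_neg1 h Ph). transitivity (I2 (fun s t => h' (IZR a' * s + IZR b' * t) (IZR c' * s + IZR d' * t))); [| exact (G h' Ph')]. unfold h'. f_equal.
  apply functional_extensionality; intro s; apply functional_extensionality; intro t.
  rewrite !opp_IZR. f_equal; ring.
Qed.

Lemma good_N2 a' b' c' d' a b c d : good a' b' c' d' ->
  a = a' -> b = b' -> c = (- c')%Z -> d = (- d')%Z -> good a b c d.
Proof.
  intros G Ha Hb Hc Hd h Ph. subst.
  set (h' := fun x y => h x (- y)).
  assert (Ph' : P2 h').
  { pose proof (P2_lin h 1 0 0 (-1) Ph) as Q.
    replace h' with (fun s t => h (IZR 1 * s + IZR 0 * t) (IZR 0 * s + IZR (-1) * t)). exact Q.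
    apply functional_extensionality; intro s; apply functional_extensionality; intro t.
    unfold h'. f_equal; simpl; ring. }
  rewrite <- (I2_neg2 h Ph). transitivity (I2 (fun s t => h' (IZR a' * s + IZR b' * t) (IZR c' * s + IZR d' * t))); [| exact (G h' Ph')]. unfold h'. f_equal.
  apply functional_extensionality; intro s; apply functional_extensionality; intro t.
  rewrite !opp_IZR. f_equal; ring.
Qed.

Lemma good_S a' b' c' d' a b c d : good a' b' c' d' ->
  a = c' -> b = d' -> c = a' -> d = b' -> good a b c d.
Proof.
  intros G Ha Hb Hc Hd h Ph. subst.
  set (h' := fun x y => h y x).
  assert (Ph' : P2 h').
  { pose proof (P2_lin h 0 1 1 0 Ph) as Q.
    replace h' with (fun s t => h (IZR 0 * s + IZR 1 * t) (IZR 1 * s + IZR 0 * t)). exact Q.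
    apply functional_extensionality; intro s; apply functional_extensionality; intro t.
    unfold h'. f_equal; simpl; ring. }
  rewrite <- (I2_swap h Ph). transitivity (I2 (fun s t => h' (IZR a' * s + IZR b' * t) (IZR c' * s + IZR d' * t))); [| exact (G h' Ph')]. unfold h'. reflexivity.
Qed.



Lemma good_1b : forall b, good 1 b 0 1.
Proof.
  assert (Nn : forall n : nat, good 1 (Z.of_nat n) 0 1 /\ good 1 (- Z.of_nat n) 0 1).
  { induction n as [|n [IH1 IH2]].
    - simpl. split; apply good_id.
    - split.
      + apply (good_R1 1 1 (Z.of_nat n) 0 1); [exact IH1|reflexivity|lia|reflexivity|reflexivity].
      + apply (good_R1 (-1) 1 (- Z.of_nat n) 0 1); [exact IH2|reflexivity|lia|reflexivity|reflexivity]. }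
  intro b0. destruct (Z_le_gt_dec 0 b0).
  - replace b0 with (Z.of_nat (Z.to_nat b0)) by lia. exact (proj1 (Nn _)).
  - replace b0 with (- Z.of_nat (Z.to_nat (- b0)))%Z by lia. exact (proj2 (Nn _)).
Qed.

Lemma good_c0 a b d : (a * d = 1 \/ a * d = -1)%Z -> good a b 0 d.
Proof.
  intro H.
  assert (Ha : ((a = 1 \/ a = -1) /\ (d = 1 \/ d = -1))%Z).
  { destruct H as [H|H].
    - destruct (Z.mul_eq_1 _ _ H) as [E|E]; rewrite E in H; lia.
    - assert (H' : (a * (- d) = 1)%Z) by lia.
      destruct (Z.mul_eq_1 _ _ H') as [E|E]; rewrite E in H'; lia. }
  destruct Ha as [[Ha|Ha] [Hd|Hd]]; subst a d.
  - apply good_1b.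
  - apply (good_N2 1 b 0 1); [apply good_1b|reflexivity|reflexivity|reflexivity|reflexivity].
  - apply (good_N1 1 (- b) 0 1); [apply good_1b|reflexivity|lia|reflexivity|reflexivity].
  - apply (good_N1 1 (- b) 0 (-1)); [|reflexivity|lia|reflexivity|reflexivity].
    apply (good_N2 1 (-b) 0 1); [apply good_1b|reflexivity|reflexivity|reflexivity|reflexivity].
Qed.

Lemma good_step n (IH : forall m, (m < n)%nat -> forall a b c d, m = Z.to_nat (Z.abs a + Z.abs c) ->
  (a * d - b * c = 1 \/ a * d - b * c = -1)%Z -> good a b c d)
  k a b c d : (k = 1 \/ k = -1)%Z -> n = Z.to_nat (Z.abs a + Z.abs c) ->
  (Z.abs (a - k * c) < Z.abs a)%Z ->
  (a * d - b * c = 1 \/ a * d - b * c = -1)%Z -> good a b c d.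
Proof.
  intros Hk Hn Hlt Hdet.
  apply (good_R1 k (a - k * c) (b - k * d) c d); try ring.
  apply (IH (Z.to_nat (Z.abs (a - k * c) + Z.abs c))); try lia.
Qed.

Lemma good_all : forall n a b c d, n = Z.to_nat (Z.abs a + Z.abs c) ->
  (a * d - b * c = 1 \/ a * d - b * c = -1)%Z -> good a b c d.
Proof.
  intro n. induction n as [n IH] using lt_wf_ind. intros a b c d Hn Hdet.
  destruct (Z.eq_dec c 0) as [Hc|Hc].
  { subst. apply good_c0. lia. }
  destruct (Z.eq_dec a 0) as [Ha|Ha].
  { subst. apply (good_S c d 0 b); auto. apply good_c0. lia. }
  destruct (Z_le_gt_dec (Z.abs c) (Z.abs a)) as [Hac|Hac].
  - destruct (Z_le_gt_dec 0 a); destruct (Z_le_gt_dec 0 c).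
    + apply (good_step n IH 1); lia.
    + apply (good_step n IH (-1)); lia.
    + apply (good_step n IH (-1)); lia.
    + apply (good_step n IH 1); lia.
  - apply (good_S c d a b); auto.
    assert (Hdet' : (c * b - d * a = 1 \/ c * b - d * a = -1)%Z) by lia.
    destruct (Z_le_gt_dec 0 a); destruct (Z_le_gt_dec 0 c).
    + apply (good_step n IH 1); lia.
    + apply (good_step n IH (-1)); lia.
    + apply (good_step n IH (-1)); lia.
    + apply (good_step n IH 1); lia.
Qed.

Lemma invariance (a b c d : Z) h : (a * d - b * c = 1 \/ a * d - b * c = -1)%Z -> P2 h ->
  I2 (fun s t => h (IZR a * s + IZR b * t) (IZR c * s + IZR d * t)) = I2 h.
Proof. intros H Ph. apply (good_all _ a b c d eq_refl H h Ph). Qed.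


Lemma C2_of_2d h : (forall s t, continuity_2d_pt h s t) -> C2 h.
Proof.
  intros H s t eps He. destruct (H s t (mkposreal eps He)) as [d Hd].
  exists d. split. apply cond_pos. intros. apply Hd; auto.
Qed.

Lemma Int2_I2 h : C2 h -> Int2 h = I2 h.
Proof.
  intro H. unfold Int2, I2.
  replace (fun t => Defs.RInt (fun s => h s t) 0 (2 * PI)) with
          (fun t => RInt (fun s => h s t) 0 (2 * PI)).
  - apply DefsRInt_eq. apply cont_exRInt. intro; apply param_cont; auto.
  - apply functional_extensionality. intro t. symmetry. apply DefsRInt_eq.
    apply cont_exRInt. apply C2_cont1; auto.
Qed.

Lemma Rabs_fst_Cmod (z : Defs.C) : Rabs (fst z) <= Defs.Cmod z.
Proof.
  unfold Defs.Cmod. rewrite <- sqrt_Rsqr_abs. apply sqrt_le_1_alt.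
  unfold Rsqr. simpl. nra.
Qed.

Lemma Rabs_snd_Cmod (z : Defs.C) : Rabs (snd z) <= Defs.Cmod z.
Proof.
  unfold Defs.Cmod. rewrite <- sqrt_Rsqr_abs. apply sqrt_le_1_alt.
  unfold Rsqr. simpl. nra.
Qed.

Lemma C2_fst F : cont_T2 F -> C2 (fun s t => fst (F s t)).
Proof.
  intros [_ H] s t eps He. destruct (H s t eps He) as [d [dp Hd]].
  exists d. split; auto. intros s' t' Hs Ht.
  eapply Rle_lt_trans; [|apply (Hd s' t' Hs Ht)].
  apply (Rabs_fst_Cmod (Defs.Cadd (F s' t') (- fst (F s t), - snd (F s t)))).
Qed.

Lemma C2_snd F : cont_T2 F -> C2 (fun s t => snd (F s t)).
Proof.
  intros [_ H] s t eps He. destruct (H s t eps He) as [d [dp Hd]].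
  exists d. split; auto. intros s' t' Hs Ht.
  eapply Rle_lt_trans; [|apply (Hd s' t' Hs Ht)].
  apply (Rabs_snd_Cmod (Defs.Cadd (F s' t') (- fst (F s t), - snd (F s t)))).
Qed.

Lemma lin_2d (m n : R) s t : continuity_2d_pt (fun s t => m * s + n * t) s t.
Proof.
  apply continuity_2d_pt_plus; apply continuity_2d_pt_mult;
    try apply continuity_2d_pt_const; try apply continuity_2d_pt_id1; apply continuity_2d_pt_id2.
Qed.

Lemma cos_2d (m n : R) s t : continuity_2d_pt (fun s t => cos (m * s + n * t)) s t.
Proof.
  apply (continuity_1d_2d_pt_comp cos (fun s t => m * s + n * t)).
  apply derivable_continuous_pt, derivable_pt_cos. apply lin_2d.
Qed.

Lemma sin_2d (m n : R) s t : continuity_2d_pt (fun s t => sin (m * s + n * t)) s t.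
Proof.
  apply (continuity_1d_2d_pt_comp sin (fun s t => m * s + n * t)).
  apply derivable_continuous_pt, derivable_pt_sin. apply lin_2d.
Qed.

Lemma cos_per x : cos (x + 2 * PI) = cos x.
Proof. rewrite cos_plus, cos_2PI, sin_2PI. ring. Qed.
Lemma sin_per x : sin (x + 2 * PI) = sin x.
Proof. rewrite sin_plus, cos_2PI, sin_2PI. ring. Qed.

Lemma cos_perZ x k : cos (x + 2 * PI * IZR k) = cos x.
Proof. apply (per_int cos cos_per). Qed.
Lemma sin_perZ x k : sin (x + 2 * PI * IZR k) = sin x.
Proof. apply (per_int sin sin_per). Qed.

Definition reI (F : fun_T2) (m n : Z) s t :=
  fst (F s t) * cos (IZR m * s + IZR n * t) + snd (F s t) * sin (IZR m * s + IZR n * t).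
Definition imI (F : fun_T2) (m n : Z) s t :=
  snd (F s t) * cos (IZR m * s + IZR n * t) - fst (F s t) * sin (IZR m * s + IZR n * t).

Lemma fourier_eq F m n :
  fourier F m n = (/ (4 * PI ^ 2) * Int2 (reI F m n), / (4 * PI ^ 2) * Int2 (imI F m n)).
Proof. reflexivity. Qed.

Lemma trig_shift m n s t :
  IZR m * (s + 2 * PI) + IZR n * t = (IZR m * s + IZR n * t) + 2 * PI * IZR m /\
  IZR m * s + IZR n * (t + 2 * PI) = (IZR m * s + IZR n * t) + 2 * PI * IZR n.
Proof. split; ring. Qed.

Lemma P2_reI F m n : cont_T2 F -> P2 (reI F m n).
Proof.
  intro HF. pose proof (C2_fst F HF) as H1. pose proof (C2_snd F HF) as H2.
  destruct HF as [Hp _]. split; [|split].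
  - apply C2_of_2d. intros s t. unfold reI.
    apply (continuity_2d_pt_plus (fun s t => fst (F s t) * cos (IZR m * s + IZR n * t))
       (fun s t => snd (F s t) * sin (IZR m * s + IZR n * t))).
    + apply (continuity_2d_pt_mult (fun s t => fst (F s t)) (fun s t => cos (IZR m * s + IZR n * t))).
      apply C2_2d; assumption. apply cos_2d.
    + apply (continuity_2d_pt_mult (fun s t => snd (F s t)) (fun s t => sin (IZR m * s + IZR n * t))).
      apply C2_2d; assumption. apply sin_2d.
  - intros s t. unfold reI. destruct (trig_shift m n s t) as [E _]. rewrite E.
    rewrite cos_perZ, sin_perZ. destruct (Hp s t) as [-> _]. reflexivity.
  - intros s t. unfold reI. destruct (trig_shift m n s t) as [_ E]. rewrite E.
    rewrite cos_perZ, sin_perZ. destruct (Hp s t) as [_ ->]. reflexivity.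
Qed.

Lemma P2_imI F m n : cont_T2 F -> P2 (imI F m n).
Proof.
  intro HF. pose proof (C2_fst F HF) as H1. pose proof (C2_snd F HF) as H2.
  destruct HF as [Hp _]. split; [|split].
  - apply C2_of_2d. intros s t. unfold imI.
    apply (continuity_2d_pt_minus (fun s t => snd (F s t) * cos (IZR m * s + IZR n * t))
       (fun s t => fst (F s t) * sin (IZR m * s + IZR n * t))).
    + apply (continuity_2d_pt_mult (fun s t => snd (F s t)) (fun s t => cos (IZR m * s + IZR n * t))).
      apply C2_2d; assumption. apply cos_2d.
    + apply (continuity_2d_pt_mult (fun s t => fst (F s t)) (fun s t => sin (IZR m * s + IZR n * t))).
      apply C2_2d; assumption. apply sin_2d.
  - intros s t. unfold imI. destruct (trig_shift m n s t) as [E _]. rewrite E.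
    rewrite cos_perZ, sin_perZ. destruct (Hp s t) as [-> _]. reflexivity.
  - intros s t. unfold imI. destruct (trig_shift m n s t) as [_ E]. rewrite E.
    rewrite cos_perZ, sin_perZ. destruct (Hp s t) as [_ ->]. reflexivity.
Qed.

Lemma arg_eq (a b c d m n : Z) s t :
  IZR (m * a + n * c) * s + IZR (m * b + n * d) * t =
  IZR m * (IZR a * s + IZR b * t) + IZR n * (IZR c * s + IZR d * t).
Proof. rewrite !plus_IZR, !mult_IZR. ring. Qed.

Lemma fourier_piA (a b c d m n : Z) F :
  (a * d - b * c = 1 \/ a * d - b * c = -1)%Z -> cont_T2 F ->
  fourier (piA a b c d F) (m * a + n * c) (m * b + n * d) = fourier F m n.
Proof.
  intros Hdet HF. rewrite !fourier_eq.
  assert (Er : reI (piA a b c d F) (m * a + n * c) (m * b + n * d) =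
     fun s t => reI F m n (IZR a * s + IZR b * t) (IZR c * s + IZR d * t)).
  { apply functional_extensionality; intro s; apply functional_extensionality; intro t.
    unfold reI, piA. rewrite arg_eq. reflexivity. }
  assert (Ei : imI (piA a b c d F) (m * a + n * c) (m * b + n * d) =
     fun s t => imI F m n (IZR a * s + IZR b * t) (IZR c * s + IZR d * t)).
  { apply functional_extensionality; intro s; apply functional_extensionality; intro t.
    unfold imI, piA. rewrite arg_eq. reflexivity. }
  rewrite Er, Ei.
  pose proof (P2_reI F m n HF) as Pr. pose proof (P2_imI F m n HF) as Pi.
  rewrite (Int2_I2 (fun s t => reI F m n (IZR a * s + IZR b * t) (IZR c * s + IZR d * t)))
    by exact (proj1 (P2_lin _ a b c d Pr)).
  rewrite (Int2_I2 (fun s t => imI F m n (IZR a * s + IZR b * t) (IZR c * s + IZR d * t)))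
    by exact (proj1 (P2_lin _ a b c d Pi)).
  rewrite (Int2_I2 (reI F m n)) by exact (proj1 Pr).
  rewrite (Int2_I2 (imI F m n)) by exact (proj1 Pi).
  rewrite !invariance; auto.
Qed.


Lemma inner_cos (k : Z) c : RInt (fun s => cos (IZR k * s + c)) 0 (2 * PI) =
  if Z.eq_dec k 0 then 2 * PI * cos c else 0.
Proof.
  destruct (Z.eq_dec k 0) as [Hk|Hk].
  - subst. rewrite (RInt_ext _ (fun _ => cos c)). rewrite RInt_const.
    unfold scal; simpl; unfold mult; simpl. ring.
    intros. f_equal. simpl. ring.
  - assert (Hk' : IZR k <> 0) by (apply not_0_IZR; auto).
    apply is_RInt_unique.
    assert (E : 0 = @minus R_AbelianGroup (sin (IZR k * (2 * PI) + c) / IZR k) (sin (IZR k * 0 + c) / IZR k)).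
    { replace (IZR k * (2 * PI) + c) with (c + 2 * PI * IZR k) by ring.
      rewrite sin_perZ. replace (IZR k * 0 + c) with c by ring.
      unfold minus, plus, opp; simpl. ring. }
    pose proof (is_RInt_derive (V:=R_CompleteNormedModule) (fun x => sin (IZR k * x + c) / IZR k) (fun x => cos (IZR k * x + c)) 0 (2 * PI)) as K.
    simpl in K. match type of K with context [is_RInt _ _ _ ?v] => replace v with 0 in K by exact E end.
    apply K.
    + intros x _. auto_derive. auto. field. auto.
    + intros x _. apply (ex_derive_continuous (K:=R_AbsRing) (V:=R_NormedModule)). auto_derive. auto.
Qed.

Lemma inner_sin (k : Z) c : RInt (fun s => sin (IZR k * s + c)) 0 (2 * PI) =
  if Z.eq_dec k 0 then 2 * PI * sin c else 0.
Proof.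
  destruct (Z.eq_dec k 0) as [Hk|Hk].
  - subst. rewrite (RInt_ext _ (fun _ => sin c)). rewrite RInt_const.
    unfold scal; simpl; unfold mult; simpl. ring.
    intros. f_equal. simpl. ring.
  - assert (Hk' : IZR k <> 0) by (apply not_0_IZR; auto).
    apply is_RInt_unique.
    assert (E : 0 = @minus R_AbelianGroup (- cos (IZR k * (2 * PI) + c) / IZR k) (- cos (IZR k * 0 + c) / IZR k)).
    { replace (IZR k * (2 * PI) + c) with (c + 2 * PI * IZR k) by ring.
      rewrite cos_perZ. replace (IZR k * 0 + c) with c by ring.
      unfold minus, plus, opp; simpl. field. auto. }
    pose proof (is_RInt_derive (V:=R_CompleteNormedModule) (fun x => - cos (IZR k * x + c) / IZR k) (fun x => sin (IZR k * x + c)) 0 (2 * PI)) as K.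
    simpl in K. match type of K with context [is_RInt _ _ _ ?v] => replace v with 0 in K by exact E end.
    apply K.
    + intros x _. auto_derive. auto. field. auto.
    + intros x _. apply (ex_derive_continuous (K:=R_AbsRing) (V:=R_NormedModule)). auto_derive. auto.
Qed.

Lemma I2_cos k l : I2 (fun s t => cos (IZR k * s + IZR l * t)) =
  if Z.eq_dec k 0 then (if Z.eq_dec l 0 then 4 * PI ^ 2 else 0) else 0.
Proof.
  unfold I2. rewrite (RInt_ext _ (fun t => if Z.eq_dec k 0 then 2 * PI * cos (IZR l * t) else 0)).
  2:{ intros. apply inner_cos. }
  destruct (Z.eq_dec k 0).
  - assert (Hex : ex_RInt (fun t => cos (IZR l * t)) 0 (2 * PI)).
    { apply cont_exRInt. intro x. apply derivable_continuous_pt. reg. }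
    assert (S : RInt (fun t => 2 * PI * cos (IZR l * t)) 0 (2 * PI) = 2 * PI * RInt (fun t => cos (IZR l * t)) 0 (2 * PI))
      by exact (RInt_scal (V:=R_CompleteNormedModule) _ _ _ _ Hex).
    rewrite S.
    + rewrite (RInt_ext (fun t => cos (IZR l * t)) (fun t => cos (IZR l * t + 0))).
      2:{ intros. rewrite Rplus_0_r. auto. }
      rewrite inner_cos. rewrite cos_0. destruct (Z.eq_dec l 0); simpl; ring.
  - rewrite RInt_const. unfold scal; simpl; unfold mult; simpl. ring.
Qed.

Lemma I2_sin k l : I2 (fun s t => sin (IZR k * s + IZR l * t)) = 0.
Proof.
  unfold I2. rewrite (RInt_ext _ (fun t => if Z.eq_dec k 0 then 2 * PI * sin (IZR l * t) else 0)).
  2:{ intros. apply inner_sin. }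
  destruct (Z.eq_dec k 0).
  - assert (Hex : ex_RInt (fun t => sin (IZR l * t)) 0 (2 * PI)).
    { apply cont_exRInt. intro x. apply derivable_continuous_pt. reg. }
    assert (S : RInt (fun t => 2 * PI * sin (IZR l * t)) 0 (2 * PI) = 2 * PI * RInt (fun t => sin (IZR l * t)) 0 (2 * PI))
      by exact (RInt_scal (V:=R_CompleteNormedModule) _ _ _ _ Hex).
    rewrite S.
    + rewrite (RInt_ext (fun t => sin (IZR l * t)) (fun t => sin (IZR l * t + 0))).
      2:{ intros. rewrite Rplus_0_r. auto. }
      rewrite inner_sin. rewrite sin_0. destruct (Z.eq_dec l 0); simpl; ring.
  - rewrite RInt_const. unfold scal; simpl; unfold mult; simpl. ring.
Qed.

Lemma Cmod_le (z : Defs.C) : Defs.Cmod z <= Rabs (fst z) + Rabs (snd z).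
Proof.
  unfold Defs.Cmod. rewrite <- (sqrt_Rsqr (Rabs (fst z) + Rabs (snd z))).
  2:{ pose proof (Rabs_pos (fst z)); pose proof (Rabs_pos (snd z)); lra. }
  apply sqrt_le_1_alt. pose proof (Rsqr_abs (fst z)). pose proof (Rsqr_abs (snd z)).
  unfold Rsqr in *. pose proof (Rabs_pos (fst z)); pose proof (Rabs_pos (snd z)). simpl. nra.
Qed.

Lemma cont_T2_P2 F : cont_T2 F -> P2 (fun s t => fst (F s t)) /\ P2 (fun s t => snd (F s t)).
Proof.
  intro H. pose proof (C2_fst F H). pose proof (C2_snd F H). destruct H as [Hp _].
  split; (split; [assumption|split]); intros s t; 
    first [ rewrite (proj1 (Hp s t)); reflexivity | rewrite (proj2 (Hp s t)); reflexivity ].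
Qed.

Lemma P2_cont_T2 F : P2 (fun s t => fst (F s t)) -> P2 (fun s t => snd (F s t)) -> cont_T2 F.
Proof.
  intros [C1 [P1 Q1]] [C2' [P2' Q2]]. split.
  - intros s t. split; rewrite (surjective_pairing (F _ _)), (surjective_pairing (F s t));
      [rewrite P1, P2' | rewrite Q1, Q2]; reflexivity.
  - intros s t eps He.
    destruct (C1 s t (eps / 2)) as [d1 [d1p H1]]. lra.
    destruct (C2' s t (eps / 2)) as [d2 [d2p H2]]. lra.
    exists (Rmin d1 d2). split. apply Rmin_pos; auto.
    intros s' t' Hs Ht.
    assert (Hs1 : Rabs (s' - s) < d1) by (eapply Rlt_le_trans; [exact Hs|apply Rmin_l]).
    assert (Hs2 : Rabs (s' - s) < d2) by (eapply Rlt_le_trans; [exact Hs|apply Rmin_r]).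
    assert (Ht1 : Rabs (t' - t) < d1) by (eapply Rlt_le_trans; [exact Ht|apply Rmin_l]).
    assert (Ht2 : Rabs (t' - t) < d2) by (eapply Rlt_le_trans; [exact Ht|apply Rmin_r]).
    eapply Rle_lt_trans. apply Cmod_le. simpl.
    pose proof (H1 s' t' Hs1 Ht1). pose proof (H2 s' t' Hs2 Ht2). simpl in *.
    unfold Rminus in *. lra.
Qed.

Lemma cont_T2_piA (a b c d : Z) F : cont_T2 F -> cont_T2 (piA a b c d F).
Proof.
  intro H. destruct (cont_T2_P2 F H) as [H1 H2].
  apply P2_cont_T2.
  - exact (P2_lin _ a b c d H1).
  - exact (P2_lin _ a b c d H2).
Qed.

Definition ch (m n : Z) : fun_T2 :=
  fun s t => (cos (IZR m * s + IZR n * t), sin (IZR m * s + IZR n * t)).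

Lemma cont_ch m n : cont_T2 (ch m n).
Proof.
  apply P2_cont_T2; unfold ch; simpl; (split; [apply C2_of_2d; intros; first [apply cos_2d|apply sin_2d]|split]);
    intros s t; destruct (trig_shift m n s t) as [E1 E2];
    first [rewrite E1 | rewrite E2]; first [apply cos_perZ | apply sin_perZ].
Qed.

Lemma reI_ch m n p q : reI (ch m n) p q = fun s t => cos (IZR (m - p) * s + IZR (n - q) * t).
Proof.
  apply functional_extensionality; intro s; apply functional_extensionality; intro t.
  unfold reI, ch; simpl. rewrite <- cos_minus. f_equal. rewrite !minus_IZR. ring.
Qed.

Lemma imI_ch m n p q : imI (ch m n) p q = fun s t => sin (IZR (m - p) * s + IZR (n - q) * t).
Proof.
  apply functional_extensionality; intro s; apply functional_extensionality; intro t.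
  unfold imI, ch; simpl. rewrite (Rmult_comm (sin _)), (Rmult_comm (cos _) (sin _)).
  rewrite <- sin_minus. f_equal. rewrite !minus_IZR. ring.
Qed.

Lemma fourier_ch m n p q : fourier (ch m n) p q =
  if Z.eq_dec (m - p) 0 then (if Z.eq_dec (n - q) 0 then (1, 0) else C0) else C0.
Proof.
  rewrite fourier_eq, reI_ch, imI_ch.
  rewrite !Int2_I2 by (apply C2_of_2d; intros; first [apply cos_2d|apply sin_2d]).
  rewrite I2_cos, I2_sin. pose proof PI_RGT_0.
  destruct (Z.eq_dec (m - p) 0); [destruct (Z.eq_dec (n - q) 0)|]; unfold C0; f_equal; field; lra.
Qed.

Lemma piA_ch a b c d m n : piA a b c d (ch m n) = ch (m * a + n * c) (m * b + n * d).
Proof.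
  apply functional_extensionality; intro s; apply functional_extensionality; intro t.
  unfold piA, ch. rewrite arg_eq. reflexivity.
Qed.


Lemma irr_lin alpha : irrational alpha -> forall m n : Z,
  IZR m + alpha * IZR n = 0 -> m = 0%Z /\ n = 0%Z.
Proof.
  intros Hi m n H. destruct (Z.eq_dec n 0) as [Hn|Hn].
  - subst. split; auto. apply eq_IZR. simpl in H. lra.
  - exfalso. apply Hi. exists (- m)%Z, n. split; auto.
    rewrite opp_IZR. assert (IZR n <> 0) by (apply not_0_IZR; auto).
    apply Rmult_eq_reg_r with (IZR n); auto. unfold Rdiv. rewrite Rmult_assoc, Rinv_l; auto. lra.
Qed.

Lemma onlyif_alg alpha (a b c d : Z) : 0 < alpha -> irrational alpha ->
  (a * d - b * c = 1 \/ a * d - b * c = -1)%Z ->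
  (forall m n : Z, IZR m + alpha * IZR n > 0 ->
     IZR m * (IZR a + alpha * IZR b) + IZR n * (IZR c + alpha * IZR d) >= 0) ->
  IZR a + alpha * IZR b > 0 /\ IZR c + alpha * IZR d = alpha * (IZR a + alpha * IZR b).
Proof.
  intros Ha Hi Hdet H.
  set (l := IZR a + alpha * IZR b). set (mu := IZR c + alpha * IZR d).
  assert (Hmu : mu = alpha * l).
  { destruct (Req_dec mu (alpha * l)) as [E|E]; auto. exfalso.
    set (del := mu - alpha * l).
    assert (Hd : Rabs del > 0) by (apply Rabs_pos_lt; unfold del; lra).
    set (N := up (Rabs l / Rabs del)).
    destruct (archimed (Rabs l / Rabs del)) as [HN _]. fold N in HN.
    assert (HN' : IZR N * Rabs del > Rabs l).
    { apply Rmult_gt_compat_r with (r := Rabs del) in HN; auto.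
      unfold Rdiv in HN. rewrite Rmult_assoc, Rinv_l in HN by lra. lra. }
    destruct (Rlt_dec 0 del) as [Hpos|Hneg].
    + set (n := (- N)%Z). set (m := up (- alpha * IZR n)).
      destruct (archimed (- alpha * IZR n)) as [H1 H2]. fold m in H1, H2.
      specialize (H m n ltac:(lra)). fold l mu in H.
      assert (Hnd : IZR n * del = - (IZR N * Rabs del)).
      { unfold n. rewrite opp_IZR. rewrite Rabs_pos_eq by lra. ring. }
      assert (Hr : 0 < IZR m + alpha * IZR n <= 1) by lra.
      assert (Hl : l * (IZR m + alpha * IZR n) <= Rabs l).
      { pose proof (Rle_abs l). pose proof (Rabs_pos l). nra. }
      assert (IZR m * l + IZR n * mu = l * (IZR m + alpha * IZR n) + IZR n * del)
        by (unfold del; ring). lra.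
    + set (n := N). set (m := up (- alpha * IZR n)).
      destruct (archimed (- alpha * IZR n)) as [H1 H2]. fold m in H1, H2.
      specialize (H m n ltac:(lra)). fold l mu in H.
      assert (Hnd : IZR n * del = - (IZR N * Rabs del)).
      { unfold n. assert (del < 0) by (unfold del in *; lra).
        rewrite Rabs_left by lra. ring. }
      assert (Hr : 0 < IZR m + alpha * IZR n <= 1) by lra.
      assert (Hl : l * (IZR m + alpha * IZR n) <= Rabs l).
      { pose proof (Rle_abs l). pose proof (Rabs_pos l). nra. }
      assert (IZR m * l + IZR n * mu = l * (IZR m + alpha * IZR n) + IZR n * del)
        by (unfold del; ring). lra. }
  split; auto.
  assert (H10 : 1 * l + 0 * mu >= 0) by (apply (H 1%Z 0%Z); simpl; lra).
  destruct (Req_dec l 0) as [E|E].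
  - exfalso. destruct (irr_lin alpha Hi a b E). subst. lia.
  - lra.
Qed.

Lemma det_D (a b c d : Z) : (a * d - b * c = 1 \/ a * d - b * c = -1)%Z ->
  exists D : Z, (a * d - b * c = D)%Z /\ (D * D = 1)%Z.
Proof. intros [H|H]; [exists 1%Z | exists (-1)%Z]; lia. Qed.

Lemma inv_pt (a b c d : Z) : (a * d - b * c = 1 \/ a * d - b * c = -1)%Z ->
  forall x y, exists s t, IZR a * s + IZR b * t = x /\ IZR c * s + IZR d * t = y.
Proof.
  intros Hdet x y. destruct (det_D a b c d Hdet) as [D [HD HD2]].
  assert (R1 : IZR a * IZR d - IZR b * IZR c = IZR D)
    by (rewrite <- HD, minus_IZR, !mult_IZR; ring).
  assert (R2 : IZR D * IZR D = 1) by (rewrite <- mult_IZR, HD2; reflexivity).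
  exists (IZR D * (IZR d * x - IZR b * y)), (IZR D * (IZR a * y - IZR c * x)). split.
  - replace (IZR a * (IZR D * (IZR d * x - IZR b * y)) + IZR b * (IZR D * (IZR a * y - IZR c * x)))
      with (IZR D * (IZR a * IZR d - IZR b * IZR c) * x) by ring.
    rewrite R1, R2. ring.
  - replace (IZR c * (IZR D * (IZR d * x - IZR b * y)) + IZR d * (IZR D * (IZR a * y - IZR c * x)))
      with (IZR D * (IZR a * IZR d - IZR b * IZR c) * y) by ring.
    rewrite R1, R2. ring.
Qed.

Lemma into_gen alpha (a b c d : Z) :
  (a * d - b * c = 1 \/ a * d - b * c = -1)%Z ->
  IZR a + alpha * IZR b > 0 ->
  IZR b * alpha ^ 2 + (IZR a - IZR d) * alpha - IZR c = 0 ->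
  forall F, in_Aalpha alpha F -> in_Aalpha alpha (piA a b c d F).
Proof.
  intros Hdet Hl Hq F [HF HFf]. split. apply cont_T2_piA; auto.
  intros m' n' Hneg.
  destruct (det_D a b c d Hdet) as [D [HD HD2]].
  set (m := (D * (d * m' - c * n'))%Z). set (n := (D * (a * n' - b * m'))%Z).
  assert (E1 : m' = (m * a + n * c)%Z).
  { assert (E : (m * a + n * c = (D * (a * d - b * c)) * m')%Z) by (unfold m, n; ring).
    rewrite HD, HD2 in E. lia. }
  assert (E2 : n' = (m * b + n * d)%Z).
  { assert (E : (m * b + n * d = (D * (a * d - b * c)) * n')%Z) by (unfold m, n; ring).
    rewrite HD, HD2 in E. lia. }
  clearbody m n.
  assert (Hmu : IZR c + alpha * IZR d = alpha * (IZR a + alpha * IZR b)).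
  { assert (IZR c + alpha * IZR d - alpha * (IZR a + alpha * IZR b) =
       - (IZR b * alpha ^ 2 + (IZR a - IZR d) * alpha - IZR c)) by ring. lra. }
  assert (Hrel : IZR m' + alpha * IZR n' = (IZR a + alpha * IZR b) * (IZR m + alpha * IZR n)).
  { rewrite E1, E2, !plus_IZR, !mult_IZR.
    replace (IZR m * IZR a + IZR n * IZR c + alpha * (IZR m * IZR b + IZR n * IZR d)) with
      (IZR m * (IZR a + alpha * IZR b) + IZR n * (IZR c + alpha * IZR d)) by ring.
    rewrite Hmu. ring. }
  assert (Hmn : IZR m + alpha * IZR n < 0).
  { destruct (Rlt_or_le (IZR m + alpha * IZR n) 0) as [h|h]; auto.
    exfalso. pose proof (Rmult_le_pos _ _ (Rlt_le _ _ Hl) h). lra. }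
  rewrite E1, E2. rewrite fourier_piA; auto.
Qed.

Lemma lub_equiv (P Q : R -> Prop) M : (forall x, P x <-> Q x) -> (is_lub P M <-> is_lub Q M).
Proof.
  intro H. unfold is_lub, is_upper_bound. split; intros [H1 H2]; split.
  - intros x Hx. apply H1, H; auto.
  - intros b Hb. apply H2. intros x Hx. apply Hb, H; auto.
  - intros x Hx. apply H1, H; auto.
  - intros b Hb. apply H2. intros x Hx. apply Hb, H; auto.
Qed.

Theorem mainTheorem9 (alpha : R) (m1 n1 m2 n2 : Z)
  (Halpha : 0 < alpha) (Hirr : irrational alpha)
  (HA : in_GL2Z m1 n1 m2 n2) :
  restricts_to_isometric_automorphism alpha m1 n1 m2 n2 <->
  (IZR m1 + alpha * IZR n1 > 0 /\
   IZR n1 * alpha ^ 2 + (IZR m1 - IZR n2) * alpha - IZR m2 = 0).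
Proof.
  unfold in_GL2Z in HA. split.
  - intros [Hinto _].
    assert (Hpos : forall m n : Z, IZR m + alpha * IZR n > 0 ->
      IZR m * (IZR m1 + alpha * IZR n1) + IZR n * (IZR m2 + alpha * IZR n2) >= 0).
    { intros m n Hmn.
      assert (Hin : in_Aalpha alpha (ch m n)).
      { split. apply cont_ch. intros p q Hpq. rewrite fourier_ch.
        destruct (Z.eq_dec (m - p) 0); [destruct (Z.eq_dec (n - q) 0)|]; auto.
        exfalso. assert (m = p) by lia. assert (n = q) by lia. subst. lra. }
      apply Hinto in Hin. rewrite piA_ch in Hin. destruct Hin as [_ Hf].
      destruct (Rge_or_lt (IZR m * (IZR m1 + alpha * IZR n1) + IZR n * (IZR m2 + alpha * IZR n2)) 0)
        as [h|h]; auto. exfalso.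
      assert (Hlt : IZR (m * m1 + n * m2) + alpha * IZR (m * n1 + n * n2) < 0).
      { rewrite !plus_IZR, !mult_IZR. 
        replace (IZR m * IZR m1 + IZR n * IZR m2 + alpha * (IZR m * IZR n1 + IZR n * IZR n2))
          with (IZR m * (IZR m1 + alpha * IZR n1) + IZR n * (IZR m2 + alpha * IZR n2)) by ring.
        exact h. }
      specialize (Hf _ _ Hlt). rewrite fourier_ch, !Z.sub_diag in Hf. simpl in Hf.
      unfold C0 in Hf. injection Hf. lra. }
    destruct (onlyif_alg alpha m1 n1 m2 n2 Halpha Hirr HA Hpos) as [Hl Hmu].
    split; auto.
    replace (IZR n1 * alpha ^ 2 + (IZR m1 - IZR n2) * alpha - IZR m2) with
      (alpha * (IZR m1 + alpha * IZR n1) - (IZR m2 + alpha * IZR n2)) by ring. lra.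
  - intros [Hl Hq].
    destruct (det_D m1 n1 m2 n2 HA) as [D [HD HD2]].
    assert (R1 : IZR m1 * IZR n2 - IZR n1 * IZR m2 = IZR D)
      by (rewrite <- HD, minus_IZR, !mult_IZR; ring).
    assert (R2 : IZR D * IZR D = 1) by (rewrite <- mult_IZR, HD2; reflexivity).
    split; [|split; [|split; [|split; [|split]]]].
    + apply into_gen; auto.
    + intros G HG.
      exists (piA (D * n2) (- (D * n1)) (- (D * m2)) (D * m1) G). split.
      * apply into_gen; auto.
        -- assert (((D * n2) * (D * m1) - (- (D * n1)) * (- (D * m2)) = (D * D) * (m1 * n2 - n1 * m2))%Z)
             by ring. rewrite HD, HD2 in H. lia.
        -- rewrite !opp_IZR, !mult_IZR.
           assert (Hll : (IZR m1 + alpha * IZR n1) * (IZR D * IZR n2 + alpha * - (IZR D * IZR n1)) = 1).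
           { replace ((IZR m1 + alpha * IZR n1) * (IZR D * IZR n2 + alpha * - (IZR D * IZR n1))) with
               (IZR D * (IZR m1 * IZR n2 - IZR n1 * IZR m2) -
                IZR D * IZR n1 * (IZR n1 * alpha ^ 2 + (IZR m1 - IZR n2) * alpha - IZR m2)) by ring.
             rewrite Hq, R1, R2. ring. }
           nra.
        -- rewrite !opp_IZR, !mult_IZR.
           replace (- (IZR D * IZR n1) * alpha ^ 2 + (IZR D * IZR n2 - IZR D * IZR m1) * alpha - - (IZR D * IZR m2))
             with (- IZR D * (IZR n1 * alpha ^ 2 + (IZR m1 - IZR n2) * alpha - IZR m2)) by ring.
           rewrite Hq. ring.
      * intros s t. unfold piA. rewrite !opp_IZR, !mult_IZR. f_equal.
        -- replace (IZR D * IZR n2 * (IZR m1 * s + IZR n1 * t) + - (IZR D * IZR n1) * (IZR m2 * s + IZR n2 * t))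
             with (IZR D * (IZR m1 * IZR n2 - IZR n1 * IZR m2) * s) by ring.
           rewrite R1, R2. ring.
        -- replace (- (IZR D * IZR m2) * (IZR m1 * s + IZR n1 * t) + IZR D * IZR m1 * (IZR m2 * s + IZR n2 * t))
             with (IZR D * (IZR m1 * IZR n2 - IZR n1 * IZR m2) * t) by ring.
           rewrite R1, R2. ring.
    + intros F1 F2 _ _ Hfeq x y.
      destruct (inv_pt m1 n1 m2 n2 HA x y) as [s [t [Ex Ey]]].
      specialize (Hfeq s t). unfold piA in Hfeq. rewrite Ex, Ey in Hfeq. exact Hfeq.
    + intros F1 F2 _ _. split; intros s t; reflexivity.
    + intros k F _ s t. reflexivity.
    + intros F M _. apply lub_equiv. intro x. split.
      * intros [u [v Hx]]. destruct (inv_pt m1 n1 m2 n2 HA u v) as [s [t [Ex Ey]]].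
        exists s, t. unfold piA. rewrite Ex, Ey. exact Hx.
      * intros [s [t Hx]]. unfold piA in Hx. eexists; eexists; exact Hx.
Qed.
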